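(* Let $N$ be a network with $n$ boundary vertices and excedance $k$, let $r\ge1$ and $\lambda$ with $0\le\lambda_i\le r$, $\sum\lambda_i=kr$. Let $\mathcal S=(S_1,\dots,S_n)$ be a list of boundary label subsets and let $\mathcal I=(I_1,\dots,I_r)$ be the dual list, $I_i=\{j\in[n]: i\in S_j\}$ (so $|I_i|=k$ and the multiset union of the $I_i$ is $\{1^{\lambda_1},\dots,n^{\lambda_n}\}$). Then $$\Delta_{I_1}(N)\Delta_{I_2}(N)\cdots\Delta_{I_r}(N)=\mathrm{sign}(\mathcal S)\,\mathrm{Web}_r(N;\lambda)(E_{\mathcal S}).$$
   Context: Networks. A planar bipartite graph in the disk is a graph $G$ embedded in a closed disk, vertices colored black or white, every edge joining opposite colors; $n$ boundary vertices labeled $1,\dots,n$ counterclockwise, all black, the $i$-th incident to at most one edge $b_i$; others interior. A network $N$ is such a $G$ with edge weights $\mathrm{wt}(e)\in\mathbb C^\times$. An almost perfect matching $\pi$ uses every interior vertex exactly once and each boundary vertex at most once; $\partial(\pi)$ is the set of boundary vertices used; $\mathrm{wt}(\pi)=\prod_{e\in\pi}\mathrm{wt}(e)$; excedance $k=|\partial(\pi)|$ = #interior white − #interior black vertices; $N$ is assumed to have an almost perfect matching. $\Delta_I(N)=\sum_{\partial(\pi)=I}\mathrm{wt}(\pi)$. Tensors. $U=\mathbb C^r$, basis $E_1,\dots,E_r$, $E_1\wedge\cdots\wedge E_r=1$. $\mathcal W_\lambda(U)=\mathrm{Hom}_{SL(U)}(\bigotimes_i\bigwedge^{\lambda_i}U,\mathbb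 C)$. $E_S$ = wedge of $E_i$, $i\in S$, increasingly. Boundary label subsets: $\mathcal S=(S_1,\dots,S_n)$, $|S_j|=\lambda_j$, multiset union $\{1^k,\dots,r^k\}$; $E_{\mathcal S}=E_{S_1}\otimes\cdots\otimes E_{S_n}$; $\mathrm{sign}(\mathcal S)=(-1)^{\mathrm{inv}}$, $\mathrm{inv}$ = inversions of the word listing $S_1$ increasingly, then $S_2$, etc. Weblike subgraphs: multiplicities $m(e)\in\{0,\dots,r\}$ on edges of $G$ summing to $r$ at each interior vertex; degree $\lambda(W)=(m(b_1),\dots,m(b_n))$; $\mathrm{wt}(W)=\prod_e\mathrm{wt}(e)^{m(e)}$. Consistent labeling: sets $S(e)\subset[r]$, $|S(e)|=m(e)$, pairwise disjoint at each interior vertex; $a(\mathcal S;W)$ = number with $S(b_j)=S_j$. $\mathbf W\in\mathcal W_\lambda(U)$ is the unique invariant with $\mathbf W(E_{\mathcal S})=\mathrm{sign}(\mathcal S)a(\mathcal S;W)$ for all $\mathcal S$. $\mathrm{Web}_r(N;\lambda)=\sum_{\lambda(W)=\lambda}\mathrm{wt}(W)\mathbf W$. *)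

(* Defs.v *)
From HB Require Import structures.
From mathcomp Require Import all_boot all_order all_algebra.
Set Implicit Arguments. Unset Strict Implicit. Unset Printing Implicit Defensive.
Import Order.TTheory GRing.Theory Num.Theory.

(*  - black v  : colour of v (true = black, false = white)                   *)
(*  - wend e / bend e : the white / black endpoint of edge e                 *)
(*  - bd j : the boundary vertex labelled j (j : 'I_n, i.e. labels 1..n are  *)
(*           0..n-1 here)                                                   *)
Record bgraph (n : nat) := BGraph {
  gV : finType;
  gE : finType;
  black : pred gV;
  wend : gE -> gV;
  bend : gE -> gV;
  bd : 'I_n -> gV
}.

Section Network.
Variables (n : nat) (G : bgraph n).
Local Notation V := (gV G).
Local Notation E := (gE G).

Definition incident (e : E) (v : V) : bool :=
  (wend e == v) || (bend e == v).

Definition interior (v : V) : bool := ~~ [exists j, @bd n G j == v].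

Definition is_bgraph : Prop :=
  [/\ forall e : E, black (bend e) && ~~ black (wend e),
      injective (@bd n G),
      forall j, black (@bd n G j) &
      forall j, (#|[set e | incident e (@bd n G j)]| <= 1)%N ].

Definition exced : nat :=
  (#|[set v | interior v && ~~ black v]|
   - #|[set v | interior v && black v]|)%N.

Definition mdeg (pi : {set E}) (v : V) : nat := #|[set e in pi | incident e v]|.

Definition almost_perfect (pi : {set E}) : bool :=
  [forall v, if interior v then mdeg pi v == 1%N else (mdeg pi v <= 1)%N].

Definition bdry (pi : {set E}) : {set 'I_n} := [set j | mdeg pi (@bd n G j) == 1%N].

Section Weights.
Variables (R : comNzRingType) (wt : E -> R).
Local Open Scope ring_scope.

Definition wt_match (pi : {set E}) : R := \prod_(e in pi) wt e.

Definition Delta (I : {set 'I_n}) : R :=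
  \sum_(pi : {set E} | almost_perfect pi && (bdry pi == I)) wt_match pi.

Variable r : nat.

Definition mult_at (m : {ffun E -> 'I_r.+1}) (v : V) : nat :=
  (\sum_(e | incident e v) (m e : nat))%N.

Definition weblike (m : {ffun E -> 'I_r.+1}) : bool :=
  [forall v, interior v ==> (mult_at m v == r)].

(* degree lambda(W) = (m(b_1),...,m(b_n)); m(b_j) = 0 if no edge at bd j *)
Definition web_degree (m : {ffun E -> 'I_r.+1}) (j : 'I_n) : nat :=
  mult_at m (@bd n G j).

Definition wt_web (m : {ffun E -> 'I_r.+1}) : R := \prod_e wt e ^+ m e.

Definition consistent (m : {ffun E -> 'I_r.+1}) (L : {ffun E -> {set 'I_r}}) : bool :=
  [forall e, #|L e| == (m e : nat)] &&
  [forall v, interior v ==>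
     [forall e, forall e', (incident e v && incident e' v && (e != e'))
                             ==> [disjoint L e & L e']]].

(* label of the boundary edge b_j (empty if there is no such edge) *)
Definition blabel (L : {ffun E -> {set 'I_r}}) (j : 'I_n) : {set 'I_r} :=
  \bigcup_(e | incident e (@bd n G j)) L e.

Definition a_count (S : 'I_n -> {set 'I_r}) (m : {ffun E -> 'I_r.+1}) : nat :=
  #|[set L : {ffun E -> {set 'I_r}} |
       consistent m L && [forall j, blabel L j == S j]]|.

End Weights.
End Network.

Definition label_word (n r : nat) (S : 'I_n -> {set 'I_r}) : seq nat :=
  flatten [seq sort leq [seq val i | i <- enum (S j)] | j <- enum 'I_n].

Definition inversions (w : seq nat) : nat :=
  (\sum_(p < size w) \sum_(q < size w | p < q) (nth 0 w q < nth 0 w p : nat))%N.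

Definition signS (R : nzRingType) (n r : nat) (S : 'I_n -> {set 'I_r}) : R :=
  (-1) ^+ inversions (label_word S).

Definition dual_list (n r : nat) (S : 'I_n -> {set 'I_r}) (i : 'I_r) : {set 'I_n} :=
  [set j | i \in S j].

(* Value of the web invariant bold-W on E_S: by definition it is
   sign(S) * a(S;W); and Web_r(N;lambda)(E_S) = sum over weblike W of degree
   lambda of wt(W) * bold-W(E_S). *)
Definition web_invariant_at (n : nat) (G : bgraph n) (R : comNzRingType) (r : nat)
  (m : {ffun gE G -> 'I_r.+1}) (S : 'I_n -> {set 'I_r}) : R :=
  (signS R S * (a_count S m)%:R)%R.

Definition Web_at (n : nat) (G : bgraph n) (R : comNzRingType) (wt : gE G -> R)
  (r : nat) (lam : 'I_n -> nat) (S : 'I_n -> {set 'I_r}) : R :=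
  (\sum_(m : {ffun gE G -> 'I_r.+1} |
           weblike m && [forall j, web_degree m j == lam j])
     wt_web wt m * web_invariant_at R m S)%R.

(* Main.v *)
Require Import Defs.
From HB Require Import structures.
From mathcomp Require Import all_boot all_order all_algebra.
Import GRing.Theory Num.Theory.

Set Implicit Arguments. Unset Strict Implicit. Unset Printing Implicit Defensive.

Lemma dcount (T : finType) r (A : {set T}) (L : T -> {set 'I_r}) :
  (\sum_(e in A) #|L e|)%N = (\sum_(i < r) #|[set e in A | i \in L e]|)%N.
Proof.
transitivity (\sum_(e in A) \sum_(i < r) ((i \in L e) : nat))%N.
  apply: eq_bigr => e _; rewrite -sum1_card big_mkcond /=.
  by apply: eq_bigr => i _; case: (i \in L e).
rewrite exchange_big /=; apply: eq_bigr => i _.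
rewrite -sum1_card big_mkcond /= [in RHS]big_mkcond /=.
by apply: eq_bigr => e _; rewrite !inE; case: (e \in A); case: (i \in L e).
Qed.

Lemma key (T : finType) r (A : {set T}) (L : T -> {set 'I_r}) :
  (forall i : 'I_r, #|[set e in A | i \in L e]| = 1%N) <->
  ((\sum_(e in A) #|L e|)%N = r /\
   forall e e', e \in A -> e' \in A -> e != e' -> [disjoint L e & L e']).
Proof.
split.
  move=> H; split.
    by rewrite dcount (eq_bigr (fun _ => 1%N)) // sum1_card card_ord.
  move=> e e' He He' Hne; rewrite -setI_eq0; apply/eqP/setP => i.
  rewrite !inE; apply/negP => /andP[Hi Hi'].
  have : (#|[set e; e']| <= #|[set x in A | i \in L x]|)%N.
    by apply: subset_leq_card; apply/subsetP => x; rewrite !inE => /orP[]/eqP->;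
      rewrite ?He ?He' ?Hi ?Hi'.
  by rewrite H cards2 Hne.
move=> [Hs Hd].
have le1 : forall i, (#|[set e in A | i \in L e]| <= 1)%N.
  move=> i; apply/card_le1P => x; rewrite !inE => /andP[Hx Hix] y; rewrite !inE.
  apply/idP/idP; last by move/eqP->; rewrite Hx Hix.
  move=> /andP[Hy Hiy]; apply/negPn/negP => Hne.
  by have := disjointFr (Hd _ _ Hy Hx Hne) Hiy; rewrite Hix.
have := @leqif_sum 'I_r predT (fun i => #|[set e in A | i \in L e]| == 1%N)
  (fun i => #|[set e in A | i \in L e]|) (fun _ => 1%N) (fun i _ => leqif_eq (le1 i)).
rewrite -dcount Hs sum1_card card_ord => [[_ Heq]].
move: Heq; rewrite eqxx => /esym/forallP H i; exact/eqP/H.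
Qed.

Definition Tr n (G : bgraph n) r (L : {ffun gE G -> {set 'I_r}}) :
  {ffun 'I_r -> {set gE G}} := [ffun i => [set e | i \in L e]].
Definition Tr' n (G : bgraph n) r (f : {ffun 'I_r -> {set gE G}}) :
  {ffun gE G -> {set 'I_r}} := [ffun e => [set i | e \in f i]].
Definition mL n (G : bgraph n) r (L : {ffun gE G -> {set 'I_r}}) :
  {ffun gE G -> 'I_r.+1} := [ffun e => inord #|L e|].

Lemma mLE n (G : bgraph n) r (L : {ffun gE G -> {set 'I_r}}) e :
  (mL L e : nat) = #|L e|.
Proof.
rewrite ffunE inordK // ltnS.
by rewrite -[X in (_ <= X)%N]card_ord max_card.
Qed.

Lemma mdegTr n (G : bgraph n) r (L : {ffun gE G -> {set 'I_r}}) i v :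
  mdeg (Tr L i) v = #|[set e in [set e | incident e v] | i \in L e]|.
Proof. by apply: eq_card => e; rewrite !inE ffunE inE andbC. Qed.

Lemma multmL n (G : bgraph n) r (L : {ffun gE G -> {set 'I_r}}) v :
  mult_at (mL L) v = (\sum_(e in [set e | incident e v]) #|L e|)%N.
Proof. by apply: eq_big => [e|e _]; rewrite ?inE ?mLE. Qed.

Lemma blabel_eq n (G : bgraph n) r (L : {ffun gE G -> {set 'I_r}}) j i :
  (#|[set e | incident e (bd G j)]| <= 1)%N ->
  (i \in blabel L j) = (mdeg (Tr L i) (bd G j) == 1%N).
Proof.
move=> H1; rewrite mdegTr.
set B := [set e in _ | _].
have HB : (#|B| <= 1)%N.
  by apply: leq_trans H1; apply: subset_leq_card; apply/subsetP => e; rewrite !inE => /andP[].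
case: (set_0Vmem B) => [B0 | [e He]].
  rewrite B0 cards0 /=; apply/bigcupP => [[e He Hi]].
  have : e \in B by rewrite !inE He Hi.
  by rewrite B0 inE.
have -> : #|B| == 1%N.
  by rewrite eqn_leq HB card_gt0; apply/set0Pn; exists e.
by apply/bigcupP; exists e; move: He; rewrite !inE => /andP[].
Qed.

Lemma bdeg n (G : bgraph n) r (L : {ffun gE G -> {set 'I_r}}) j :
  (#|[set e | incident e (bd G j)]| <= 1)%N ->
  (\sum_(e | incident e (bd G j)) #|L e|)%N = #|blabel L j|.
Proof.
move=> H1; rewrite /blabel.
case: (set_0Vmem [set e | incident e (bd G j)]) => [A0 | [e0 He0]].
  have P0 : (fun e => incident e (bd G j)) =1 xpred0.
    move=> e /=; apply/negP => He.
    have : e \in [set e | incident e (bd G j)] by rewrite inE.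
    by rewrite A0 inE.
  by rewrite !big_pred0 ?cards0.
have P1 : (fun e => incident e (bd G j)) =1 pred1 e0.
  by move=> e /=; have := (card_le1P H1) e0 He0 e; rewrite inE.
by rewrite !(big_pred1 e0).
Qed.

Definition disjv n (G : bgraph n) r (L : {ffun gE G -> {set 'I_r}}) (v : gV G) :=
  [forall e, forall e', (incident e v && incident e' v && (e != e'))
                             ==> [disjoint L e & L e']].

Lemma kv n (G : bgraph n) r (L : {ffun gE G -> {set 'I_r}}) v :
  (forall i, mdeg (Tr L i) v == 1%N) <-> (mult_at (mL L) v == r) && disjv L v.
Proof.
have K := key [set e | incident e v] L.
split.
  move=> H; have [Hs Hd] : (\sum_(e in [set e | incident e v]) #|L e|)%N = r /\
   forall e e', e \in [set e | incident e v] -> e' \in [set e | incident e v] ->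
     e != e' -> [disjoint L e & L e'].
    by apply/K => i; apply/eqP; rewrite -mdegTr.
  rewrite multmL Hs eqxx /=; apply/forallP => e; apply/forallP => e'; apply/implyP.
  by move=> /andP[/andP[He He'] Hne]; apply: Hd; rewrite ?inE.
move=> /andP[Hs Hd] i; rewrite mdegTr; apply/eqP; move: i; apply/K; split.
  by rewrite -multmL; apply/eqP.
move=> e e'; rewrite !inE => He He' Hne.
by move/forallP: Hd => /(_ e)/forallP/(_ e')/implyP; apply; rewrite He He' Hne.
Qed.

Lemma APiff n (G : bgraph n) r (L : {ffun gE G -> {set 'I_r}}) :
  is_bgraph G ->
  [forall i, almost_perfect (Tr L i)] =
  weblike (mL L) && [forall v, interior v ==> disjv L v].
Proof.
move=> [_ _ _ Hdeg].
have nonint : forall v, ~~ interior v -> forall i, (mdeg (Tr L i) v <= 1)%N.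
  move=> v; rewrite /interior negbK => /existsP [j /eqP <-] i.
  apply: leq_trans (Hdeg j); rewrite mdegTr; apply: subset_leq_card.
  by apply/subsetP => e; rewrite !inE => /andP[].
apply/idP/idP.
  move=> /forallP H.
  have Hv : forall v, interior v -> (mult_at (mL L) v == r) && disjv L v.
    move=> v Hv; apply/kv => i; by have := forallP (H i) v; rewrite Hv.
  apply/andP; split; apply/forallP => v; apply/implyP => Hi;
    by have /andP[] := Hv v Hi.
move=> /andP[/forallP Hw /forallP Hd]; apply/forallP => i; apply/forallP => v.
case: ifP => Hv; last by apply: nonint; rewrite Hv.
have : (mult_at (mL L) v == r) && disjv L v.
  by have := implyP (Hw v) Hv; have := implyP (Hd v) Hv; move=> -> ->.
by move/kv.
Qed.

Lemma consistent_mL n (G : bgraph n) r (m : {ffun gE G -> 'I_r.+1}) L :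
  consistent m L -> m = mL L.
Proof.
move=> /andP[/forallP Hs _]; apply/ffunP => e; apply: val_inj => /=.
by rewrite mLE; apply/esym/eqP/Hs.
Qed.

Theorem mainTheorem3 (n : nat) (G : bgraph n) (C : numClosedFieldType)
  (wt : gE G -> C) (k r : nat) (lam : 'I_n -> nat) (S : 'I_n -> {set 'I_r}) :
  is_bgraph G ->
  (forall e, wt e != 0%R) ->
  (exists pi : {set gE G}, almost_perfect pi) ->
  k = exced G ->
  (1 <= r)%N ->
  (forall j, lam j <= r)%N ->
  (\sum_(j < n) lam j)%N = (k * r)%N ->
  (forall j, #|S j| = lam j) ->
  (forall i, #|[set j | i \in S j]| = k) ->
  (\prod_(i < r) Delta wt (dual_list S i))%R
    = (signS C S * Web_at wt lam S)%R.
Proof.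
move=> Hg _ _ _ _ _ _ HS _.
have [_ _ _ Hdeg] := Hg.
have -> : (signS C S * Web_at wt lam S = \sum_(m | weblike m && [forall j, web_degree m j == lam j]) \sum_(L | consistent m L && [forall j, blabel L j == S j]) wt_web wt m)%R.
  rewrite /Web_at mulr_sumr; apply: eq_bigr => m _.
  rewrite /web_invariant_at /a_count mulrCA [X in (_ * X)%R]mulrA.
  have -> : (signS C S * signS C S = 1)%R by rewrite /signS -exprMn mulrNN mulr1 expr1n.
  rewrite mul1r mulr_natr -sumr_const; apply: eq_bigl => L; by rewrite inE.
rewrite (exchange_big_dep predT) //=.
rewrite /Delta bigA_distr_big_dep.
rewrite (reindex (@Tr n G r)); last first.
  apply: onW_bij; exists (@Tr' n G r) => x.
    by apply/ffunP => e; apply/setP => i; rewrite !(ffunE, inE).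
  by apply/ffunP => e; apply/setP => i; rewrite !(ffunE, inE).
rewrite [RHS](eq_bigr (fun L => if [&& weblike (mL L) && [forall j, web_degree (mL L) j == lam j],
                   consistent (mL L) L & [forall j, blabel L j == S j]] then wt_web wt (mL L) else 0%R)); last first.
  move=> L _; case: ifP => H.
    rewrite (big_pred1 (mL L)) // => m /=; apply/idP/eqP.
      by move=> /and3P[_ Hc _]; apply: consistent_mL Hc.
    by move=> ->.
  rewrite big_pred0 // => m; apply/negP => Hm; move: (Hm) => /and3P[_ Hc _].
  by move: H; rewrite -(consistent_mL Hc) Hm.
rewrite -big_mkcond /=; apply: eq_big => L; last first.
  move=> _; rewrite /wt_match /wt_web.
  under eq_bigr => i _ do rewrite big_mkcond /=.
  rewrite exchange_big; apply: eq_bigr => e _.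
  rewrite mLE -(prodr_const (mem (L e))) [RHS]big_mkcond; apply: eq_bigr => i _.
  by rewrite !(ffunE, inE).
have Hbl : [forall i, bdry (Tr L i) == dual_list S i] = [forall j, blabel L j == S j].
  apply/forallP/forallP => H x.
    apply/eqP/setP => i; move/eqP/setP/(_ x): (H i).
    by rewrite /bdry /dual_list !inE -blabel_eq.
  apply/eqP/setP => j; move/eqP/setP/(_ x): (H j).
  by rewrite /bdry /dual_list !inE -blabel_eq.
have Hsz : [forall e, #|L e| == (mL L e : nat)] by apply/forallP => e; rewrite mLE.
have Hdg : [forall j, blabel L j == S j] -> [forall j, web_degree (mL L) j == lam j].
  move=> /forallP H; apply/forallP => j; rewrite -HS -(eqP (H j)) -bdeg //.
  by rewrite /web_degree /mult_at; apply/eqP/eq_bigr => e _; rewrite mLE.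
transitivity ([forall i, almost_perfect (Tr L i)] && [forall i, bdry (Tr L i) == dual_list S i]).
  apply/familyP/andP => [H | [/forallP H1 /forallP H2] i].
    by split; apply/forallP => i; have := H i; rewrite unfold_in => /andP[].
  by rewrite unfold_in H1 H2.
rewrite APiff // Hbl /consistent Hsz /=.
case HB: [forall j, blabel L j == S j]; last by rewrite !andbF.
by rewrite (Hdg HB) !andbT.
Qed.
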